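(* Let $A\bowtie^{\theta} I$ be an amalgamated Banach algebra as in the context, and assume $\sigma(A)\neq\emptyset$ and that the linear span of $\theta(A)I\cup I\theta(A)$ is dense in $I$. Identify characters of $A\bowtie^\theta I$ with pairs $(\phi,\psi)\in A^*\times I^*$ via $(a,i)\mapsto\phi(a)+\psi(i)$. Then $\sigma(A\bowtie^{\theta} I)=E\cup F$, where $$E=\{(\phi_{\psi,i},\psi): \psi\in\sigma(I),\ i\in I,\ \psi(i)=1\},\qquad \phi_{\psi,i}(a)=\psi(\theta(a)i)\ (a\in A),$$ $$F=\{(\phi,0):\phi\in\sigma(A)\}.$$ Moreover, with respect to the weak$^*$ topology, $E$ is open and $F$ is closed in $\sigma(A\bowtie^\theta I)$.
   Context: Let $A$ and $B$ be Banach algebras, $\theta:A\to B$ a continuous algebra homomorphism with $\|\theta\|\le 1$, and $I$ a closed two-sided ideal of $B$. The amalgamated Banach algebra $A\bowtie^{\theta} I$ is the Banach space $\{(a,i): a\in A,\ i\in I\}$ with norm $\|(a,i)\|=\|a\|+\|i\|$ and product $(a,i)\cdot(a',i')=(aa',\ \theta(a)i'+i\theta(a')+ii')$. For a Banach algebra $C$, $\sigma(C)$ denotes the set of nonzero multiplicative linear functionals (characters) on $C$, with the relative weak$^*$ topology. $\theta(A)I$ denotes $\{\theta(a)i: a\in A, i\in I\}$ and similarly for $I\theta(A)$. *)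

(* Defs.v *)
From HB Require Import structures.
From mathcomp Require Import all_boot all_order all_algebra.
Set Implicit Arguments. Unset Strict Implicit. Unset Printing Implicit Defensive.
Import Order.TTheory GRing.Theory Num.Theory.
Local Open Scope ring_scope.

(* Possibly non-unital normed / Banach algebras over a scalar field K
   (K = C or R in the paper; here any numFieldType). *)

Definition is_cauchy (K : numFieldType) (V : lmodType K) (N : V -> K)
  (u : nat -> V) : Prop :=
  forall eps : K, 0 < eps -> exists M : nat,
    forall m n : nat, (M <= m)%N -> (M <= n)%N -> N (u m - u n) < eps.

Definition converges_to (K : numFieldType) (V : lmodType K) (N : V -> K)
  (u : nat -> V) (l : V) : Prop :=
  forall eps : K, 0 < eps -> exists M : nat,
    forall n : nat, (M <= n)%N -> N (u n - l) < eps.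

Definition banach_algebra (K : numFieldType) (V : lmodType K)
  (mul : V -> V -> V) (N : V -> K) : Prop :=
  [/\
      (forall x y z, mul x (mul y z) = mul (mul x y) z),
      (forall (c : K) x y z, mul (c *: x + y) z = c *: mul x z + mul y z),
      (forall (c : K) x y z, mul z (c *: x + y) = c *: mul z x + mul z y),
      [/\ (forall x, 0 <= N x),
          (forall x, N x = 0 -> x = 0),
          (forall x y, N (x + y) <= N x + N y),
          (forall (c : K) x, N (c *: x) = `|c| * N x) &
          (forall x y, N (mul x y) <= N x * N y)] &
      (forall u : nat -> V, is_cauchy N u -> exists l, converges_to N u l)].

Definition closed_ideal (K : numFieldType) (B : lmodType K)
  (mulB : B -> B -> B) (NB : B -> K) (I : pred B) : Prop :=
  [/\ 0 \in I,
      (forall (c : K) x y, x \in I -> y \in I -> c *: x + y \in I),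
      (forall x i, i \in I -> mulB x i \in I),
      (forall x i, i \in I -> mulB i x \in I) &
      (forall (u : nat -> B) l, (forall n, u n \in I) ->
          converges_to NB u l -> l \in I)].

(* Functionals are represented as maps T -> K,
   only their values on S matter. *)
Definition is_character (K : numFieldType) (T : lmodType K)
  (mul : T -> T -> T) (S : pred T) (chi : T -> K) : Prop :=
  [/\ (forall (c : K) x y, x \in S -> y \in S -> chi (c *: x + y) = c * chi x + chi y),
      (forall x y, x \in S -> y \in S -> chi (mul x y) = chi x * chi y) &
      exists2 x, x \in S & chi x != 0].

Definition wstar_open (K : numFieldType) (T : lmodType K)
  (mul : T -> T -> T) (S : pred T) (U : (T -> K) -> Prop) : Prop :=
  forall chi, is_character mul S chi -> U chi ->
    exists n : nat, exists x : 'I_n -> T,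
      (forall k, x k \in S) /\
      exists2 eps : K, 0 < eps &
        forall chi', is_character mul S chi' ->
          (forall k, `|chi' (x k) - chi (x k)| < eps) -> U chi'.

Definition wstar_closed (K : numFieldType) (T : lmodType K)
  (mul : T -> T -> T) (S : pred T) (U : (T -> K) -> Prop) : Prop :=
  wstar_open mul S (fun chi => ~ U chi).

(* The amalgamated algebra A ⋈^θ I, realised inside A × B with carrier
   predicate {(a,i) | i ∈ I}. *)
Definition amal_mul (K : numFieldType) (A B : lmodType K)
  (mulA : A -> A -> A) (mulB : B -> B -> B) (theta : A -> B)
  (p q : (A * B)%type) : (A * B)%type :=
  (mulA p.1 q.1,
   mulB (theta p.1) q.2 + mulB p.2 (theta q.1) + mulB p.2 q.2).

Definition amal_carrier (K : numFieldType) (A B : lmodType K) (I : pred B)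
  : pred (A * B)%type := fun p => p.2 \in I.

Definition amal_norm (K : numFieldType) (A B : lmodType K)
  (NA : A -> K) (NB : B -> K) (p : (A * B)%type) : K := NA p.1 + NB p.2.

Definition in_span_thetaI (K : numFieldType) (A B : lmodType K)
  (mulB : B -> B -> B) (theta : A -> B) (I : pred B) (y : B) : Prop :=
  exists n : nat, exists (c d : 'I_n -> K) (a b : 'I_n -> A) (i j : 'I_n -> B),
    (forall k, i k \in I /\ j k \in I) /\
    y = \sum_(k < n) (c k *: mulB (theta (a k)) (i k) + d k *: mulB (j k) (theta (b k))).

(* Main.v *)
Require Import Defs.
From HB Require Import structures.
From mathcomp Require Import all_boot all_order all_algebra.
From Stdlib Require Import Classical.
From mathcomp Require Import ring.
Import Order.TTheory GRing.Theory Num.Theory.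
Local Open Scope ring_scope.

Lemma self_add0 (V : zmodType) (x : V) : x = x + x -> x = 0.
Proof. by move=> h; apply/eqP; rewrite -(addrI x (esym (etrans (addr0 x) h))). Qed.

Lemma pairE (K : numFieldType) (A B : lmodType K) c (a a' : A) (j j' : B) :
  c *: ((a,j) : (A*B)%type) + (a',j') = (c*:a+a', c*:j+j').
Proof. reflexivity. Qed.

Theorem theorem5p1 (K : numFieldType) (A B : lmodType K)
  (mulA : A -> A -> A) (NA : A -> K) (mulB : B -> B -> B) (NB : B -> K)
  (theta : A -> B) (I : pred B) :
  banach_algebra mulA NA ->
  banach_algebra mulB NB ->
  (* θ is a continuous algebra homomorphism with ||θ|| <= 1 *)
  linear theta ->
  (forall a a', theta (mulA a a') = mulB (theta a) (theta a')) ->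
  (forall a, NB (theta a) <= NA a) ->
  closed_ideal mulB NB I ->
  (* σ(A) nonempty *)
  (exists phi : A -> K, is_character mulA predT phi) ->
  (* span of θ(A)I ∪ Iθ(A) dense in I *)
  (forall x, x \in I -> forall eps : K, 0 < eps ->
     exists y, in_span_thetaI mulB theta I y /\ NB (x - y) < eps) ->
  let S := @amal_carrier K A B I in
  let mul := amal_mul mulA mulB theta in
  let E := fun chi : (A * B)%type -> K =>
    exists psi : B -> K, is_character mulB I psi /\
      exists2 i, i \in I & psi i = 1 /\
        forall a j, j \in I -> chi (a, j) = psi (mulB (theta a) i) + psi j in
  let F := fun chi : (A * B)%type -> K =>
    exists phi : A -> K, is_character mulA predT phi /\
      forall a j, j \in I -> chi (a, j) = phi a + 0 in
  [/\ (forall chi, is_character mul S chi <-> (E chi \/ F chi)),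
      wstar_open mul S E &
      wstar_closed mul S F].
Proof.
move=> [assA linAl linAr _ _] [assB linBl linBr _ _] Hlin Hmul _ [I0 Icl IL IR _] _ _.
move=> S mul E F.
have mulA0 : forall x, mulA x 0 = 0.
  move=> x; apply: self_add0; have := linAr 1 0 0 x; by rewrite !scale1r addr0; apply.
have mulB0 : forall x, mulB x 0 = 0.
  move=> x; apply: self_add0; have := linBr 1 0 0 x; by rewrite !scale1r addr0; apply.
have mul0B : forall x, mulB 0 x = 0.
  move=> x; apply: self_add0; have := linBl 1 0 0 x; by rewrite !scale1r addr0; apply.
have th0 : theta 0 = 0.
  apply: self_add0; have := Hlin 1 0 0; by rewrite !scale1r addr0; apply.
have addI : forall x y, x \in I -> y \in I -> x + y \in I.
  by move=> x y hx hy; have := Icl 1 x y hx hy; rewrite scale1r.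
have inS : forall a j, ((a, j) \in S) = (j \in I) by [].
have ch0 : forall (T : lmodType K) (P : pred T) (f : T -> K), 0 \in P ->
    (forall (c : K) x y, x \in P -> y \in P -> f (c *: x + y) = c * f x + f y) -> f 0 = 0.
  move=> T P f hP hl; apply: self_add0; have := hl 1 0 0 hP hP.
  by rewrite scale1r addr0 mul1r.
have chD : forall (T : lmodType K) (P : pred T) (f : T -> K) x y, x \in P -> y \in P ->
    (forall (c : K) x y, x \in P -> y \in P -> f (c *: x + y) = c * f x + f y) ->
    f (x + y) = f x + f y.
  by move=> T P f x y hx hy hl; have := hl 1 x y hx hy; rewrite scale1r mul1r.
have part1 : forall chi, is_character mul S chi <-> (E chi \/ F chi).
  move=> chi; split.
  - move=> [hl hm [[x0 j0] hx0 hnz]].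
    rewrite inS in hx0.
    set phi := fun a => chi (a, 0).
    set psi := fun j => chi (0, j).
    have dec : forall a j, j \in I -> chi (a, j) = phi a + psi j.
      move=> a j hj.
      have := hl 1 (a, 0) (0, j) I0 hj; rewrite /phi /psi mul1r.
      by move=> <-; congr chi; rewrite pairE scale1r scaler0 addr0 add0r.
    have psil : forall (c : K) x y, x \in I -> y \in I -> psi (c *: x + y) = c * psi x + psi y.
      move=> c x y hx hy; rewrite /psi -hl //.
      by congr chi; rewrite pairE scaler0 addr0.
    have psim : forall x y, x \in I -> y \in I -> psi (mulB x y) = psi x * psi y.
      move=> x y hx hy; rewrite /psi -hm //; congr chi.
      by rewrite /mul /amal_mul /= mulA0 th0 mulB0 mul0B !add0r.
    have phil : forall (c : K) x y, x \in predT -> y \in predT -> phi (c *: x + y) = c * phi x + phi y.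
      move=> c x y _ _; rewrite /phi -hl //.
      by congr chi; rewrite pairE scaler0 addr0.
    have phim : forall x y, x \in predT -> y \in predT -> phi (mulA x y) = phi x * phi y.
      move=> x y _ _; rewrite /phi -hm //; congr chi.
      by rewrite /mul /amal_mul /= !mulB0 mul0B !addr0.
    case: (classic (exists2 j, j \in I & psi j != 0)) => [[j hj hpj]|hno].
    + left; exists psi; split; first by split => //; exists j.
      exists ((psi j)^-1 *: j + 0); first exact: Icl.
      have hpi : psi ((psi j)^-1 *: j + 0) = 1.
        by rewrite psil // (ch0 _ _ _ I0 psil) addr0 mulVf.
      split => // a k hk; rewrite dec // -[phi a]mulr1 -hpi.
      rewrite /phi /psi -hm ?inS //; last exact: Icl.
      congr (chi _ + _); rewrite /mul /amal_mul /= mulA0 !mul0B ?th0 ?mulB0.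
      by rewrite !addr0.
    + right; exists phi; split.
        split => //; exists x0 => //.
        have pj0 : psi j0 = 0.
          by case: (eqVneq (psi j0) 0) => // h; exfalso; apply: hno; exists j0.
        by move: hnz; rewrite dec // pj0 addr0.
      move=> a k hk; rewrite dec //; congr (_ + _).
      by case: (eqVneq (psi k) 0) => // h; exfalso; apply: hno; exists k.
  - case=> [[psi [[psil psim _] [i hi [hpi hchi]]]] | [phi [[phil phim [x hx hnz]] hchi]]].
    + have psi0 := ch0 _ _ _ I0 psil.
      have R1 : forall a x, x \in I ->
          psi (mulB x (theta a)) = psi x * psi (mulB (theta a) i).
        move=> a x hx; rewrite -[psi (mulB x _)]mulr1 -hpi -psim ?IR //.
        by rewrite -assB psim ?IL.
      have L1 : forall a x, x \in I ->
          psi (mulB (theta a) x) = psi (mulB (theta a) i) * psi x.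
        move=> a x hx; rewrite -[psi (mulB _ x)]mul1r -hpi -psim ?IL //.
        by rewrite assB psim ?IR // R1 // hpi mul1r.
      split.
      * move=> c [a j] [a' j'] /=; rewrite !inS => hj hj'.
        rewrite pairE (hchi (c *: a + a')) ?Icl // hchi // hchi // Hlin linBl psil ?IL //.
        rewrite psil //; ring.
      * move=> [a j] [a' j'] /=; rewrite !inS => hj hj'.
        have h1 : mulB (theta a) j' \in I by apply: IL.
        have h2 : mulB j (theta a') \in I by apply: IR.
        have h3 : mulB j j' \in I by apply: IL.
        have h12 := addI _ _ h1 h2.
        rewrite /mul /amal_mul /= hchi; last exact: addI.
        rewrite hchi // hchi // Hmul -assB (L1 a (mulB (theta a') i)) ?IL //.
        rewrite (chD _ I _ _ _ h12 h3 psil) (chD _ I _ _ _ h1 h2 psil).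
        rewrite (L1 a j') // (R1 a' j) // (psim j j') //; ring.
      * exists (0, i); first by rewrite inS.
        by rewrite hchi // th0 mul0B psi0 add0r hpi oner_neq0.
    + have phi0 := ch0 _ predT phi isT phil.
      split.
      * move=> c [a j] [a' j'] /=; rewrite !inS => hj hj'.
        rewrite pairE (hchi (c *: a + a')) ?Icl // hchi // hchi // phil //; ring.
      * move=> [a j] [a' j'] /=; rewrite !inS => hj hj'.
        have h1 : mulB (theta a) j' \in I by apply: IL.
        have h2 : mulB j (theta a') \in I by apply: IR.
        have h3 : mulB j j' \in I by apply: IL.
        have h12 := addI _ _ h1 h2.
        rewrite /mul /amal_mul /= hchi; last exact: addI.
        rewrite (hchi a j) // (hchi a' j') // phim //; ring.
      * exists (x, 0); first by rewrite inS.
        by rewrite hchi // addr0.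
have Eval : forall chi, E chi -> exists2 i, i \in I & chi (0, i) = 1.
  move=> chi [psi [[psil _ _] [i hi [hpi hchi]]]]; exists i => //.
  by rewrite hchi // th0 mul0B (ch0 _ _ _ I0 psil) add0r.
have Fval : forall chi j, F chi -> j \in I -> chi (0, j) = 0.
  move=> chi j [phi [[phil _ _] hchi]] hj.
  by rewrite hchi // (ch0 _ predT phi isT phil) addr0.
have key : forall chi, E chi -> exists n : nat, exists x : 'I_n -> (A * B)%type,
      (forall k, x k \in S) /\
      exists2 eps : K, 0 < eps &
        forall chi', is_character mul S chi' ->
          (forall k, `|chi' (x k) - chi (x k)| < eps) -> E chi'.
  move=> chi hE; have [i hi hci] := Eval chi hE.
  exists 1%N, (fun _ => (0, i)); split => //.
  exists 1 => // chi' hc' hlt; have := hlt ord0; rewrite hci.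
  have [//|hF] := (proj1 (part1 chi') hc').
  by rewrite Fval // sub0r normrN normr1 ltxx.
split => //.
- by move=> chi _ hE; apply: key.
- move=> chi hc hnF.
  have hE : E chi by case: (proj1 (part1 chi) hc).
  have [n [x [hx [eps heps hk]]]] := key chi hE.
  exists n, x; split => //; exists eps => // chi' hc' hlt hF.
  have hE' := hk chi' hc' hlt.
  have [i hi hci] := Eval chi' hE'.
  by move: hci; rewrite Fval // => /eqP; rewrite eq_sym oner_eq0.
Qed.
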